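(* Let $\Omega$ be a set, $\Phi$ the family of coherent sets of gambles on $\Omega$ together with $\mathcal{L}(\Omega)$, and $At(\Phi)$ its set of atoms. For all $\mathcal{D}_1,\mathcal{D}_2,\mathcal{D}\in\Phi$ and all $x\in Q$: (1) $At(\mathcal{D}_1\cdot\mathcal{D}_2)=At(\mathcal{D}_1)\cap At(\mathcal{D}_2)$; (2) $At(\mathcal{L}(\Omega))=\emptyset$ and $At(\mathcal{L}^+(\Omega))=At(\Phi)$; (3) $At(\epsilon_x(\mathcal{D}))=\sigma_x(At(\mathcal{D}))$.
   Context: A gamble is a bounded function $\Omega\to\mathbb{R}$; $\mathcal{L}(\Omega)$ is the set of gambles, $\mathcal{L}^+(\Omega)=\{f:f\ge0,f\ne0\}$. A set $\mathcal{D}\subseteq\mathcal{L}(\Omega)$ is coherent if $\mathcal{L}^+(\Omega)\subseteq\mathcal{D}$, $0\notin\mathcal{D}$, and $\mathcal{D}$ is closed under addition and under multiplication by positive reals. $\Phi$ = coherent sets $\cup\{\mathcal{L}(\Omega)\}$; $\mathcal{C}(\mathcal{K})=\bigcap\{\mathcal{D}\in\Phi:\mathcal{K}\subseteq\mathcal{D}\}$; combination $\mathcal{D}_1\cdot\mathcal{D}_2=\mathcal{C}(\mathcal{D}_1\cup\mathcal{D}_2)$. $Q$ is an index set, each $x\in Q$ corresponding to a partition $\mathcal{P}_x$ of $\Omega$, with $\{\mathcal{P}_x:x\in Q\}$ closed under join (partition into nonempty intersections of blocks). $\mathcal{L}_x$ is the set of gambles constant on each block of $\mathcal{P}_x$ and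 $\epsilon_x(\mathcal{D})=\mathcal{C}(\mathcal{D}\cap\mathcal{L}_x)$. Atoms are the maximal coherent sets; $At(\Phi)$ is the set of atoms and $At(\mathcal{D})=\{M\in At(\Phi):\mathcal{D}\subseteq M\}$. For $x\in Q$, the sets $At(\epsilon_x(M))$, $M\in At(\Phi)$, form a partition of $At(\Phi)$; $M\equiv_x M'$ means $M,M'$ lie in the same block of it. For $A\subseteq At(\Phi)$, $\sigma_x(A)=\{M\in At(\Phi):\exists M'\in A,\ M\equiv_x M'\}$. *)

(* Defs.v *)
From Stdlib Require Import Reals.
Open Scope R_scope.

Definition pset (T : Type) := T -> Prop.

Section Gambles.
Variable Omega : Type.

Definition gamble (f : Omega -> R) : Prop := exists M : R, forall w, Rabs (f w) <= M.
Definition Lall : pset (Omega -> R) := gamble.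
Definition zero_g : Omega -> R := fun _ => 0.
Definition Lplus : pset (Omega -> R) :=
  fun f => gamble f /\ (forall w, 0 <= f w) /\ f <> zero_g.

Definition subset_g (A B : pset (Omega -> R)) : Prop := forall f, A f -> B f.

Definition coherent (D : pset (Omega -> R)) : Prop :=
  subset_g D Lall /\
  subset_g Lplus D /\
  ~ D zero_g /\
  (forall f g, D f -> D g -> D (fun w => f w + g w)) /\
  (forall (l : R) f, 0 < l -> D f -> D (fun w => l * f w)).

Definition Phi (D : pset (Omega -> R)) : Prop := coherent D \/ D = Lall.

Definition Cl (K : pset (Omega -> R)) : pset (Omega -> R) :=
  fun f => forall D, Phi D -> subset_g K D -> D f.

Definition combine (D1 D2 : pset (Omega -> R)) : pset (Omega -> R) :=
  Cl (fun f => D1 f \/ D2 f).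

Definition atom (M : pset (Omega -> R)) : Prop :=
  coherent M /\ forall M', coherent M' -> subset_g M M' -> M' = M.

Definition At (D : pset (Omega -> R)) : pset (pset (Omega -> R)) :=
  fun M => atom M /\ subset_g D M.
Definition AtPhi : pset (pset (Omega -> R)) := atom.

Definition is_partition (P : pset (pset Omega)) : Prop :=
  (forall B, P B -> exists w, B w) /\
  (forall w, exists B, P B /\ B w /\ forall B', P B' -> B' w -> B' = B).

Definition pjoin (P1 P2 : pset (pset Omega)) : pset (pset Omega) :=
  fun B => exists B1 B2, P1 B1 /\ P2 B2 /\ (exists w, B1 w /\ B2 w) /\
                     B = (fun w => B1 w /\ B2 w).

Definition Lpart (P : pset (pset Omega)) : pset (Omega -> R) :=
  fun f => gamble f /\
           forall B, P B -> forall w w', B w -> B w' -> f w = f w'.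

Definition eps (P : pset (pset Omega)) (D : pset (Omega -> R)) : pset (Omega -> R) :=
  Cl (fun f => D f /\ Lpart P f).

(** M ==_x M' : M and M' lie in the same block {At(eps_x(N)) : N atom}. *)
Definition equiv_x (P : pset (pset Omega)) (M M' : pset (Omega -> R)) : Prop :=
  exists N, atom N /\ At (eps P N) M /\ At (eps P N) M'.

Definition sigma_x (P : pset (pset Omega)) (A : pset (pset (Omega -> R)))
  : pset (pset (Omega -> R)) :=
  fun M => atom M /\ exists M', A M' /\ equiv_x P M M'.

End Gambles.

(* Main.v *)
Require Import Defs.
From Stdlib Require Import Reals.
From Stdlib Require Import Classical FunctionalExtensionality PropExtensionality Lra.
From mathcomp Require classical_sets.

Open Scope R_scope.

Section Proofs.
Variable Omega : Type.
Notation G := (Omega -> R).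

Lemma pset_ext (A B : pset G) : (forall f, A f <-> B f) -> A = B.
Proof. intros H; apply functional_extensionality; intro f; apply propositional_extensionality; apply H. Qed.

Lemma pset2_ext (A B : pset (pset G)) : (forall f, A f <-> B f) -> A = B.
Proof. intros H; apply functional_extensionality; intro f; apply propositional_extensionality; apply H. Qed.

Lemma gamble_sum (f g h : G) : gamble Omega f -> gamble Omega g ->
  (forall w, h w = f w + g w) -> gamble Omega h.
Proof.
  intros [M1 H1] [M2 H2] Hh; exists (M1 + M2); intro w; rewrite Hh.
  eapply Rle_trans; [apply Rabs_triang|]. specialize (H1 w); specialize (H2 w); lra.
Qed.

Lemma gamble_scale (l : R) (f : G) : gamble Omega f -> gamble Omega (fun w => l * f w).
Proof.
  intros [M H]; exists (Rabs l * M); intro w; rewrite Rabs_mult.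
  apply Rmult_le_compat_l; [apply Rabs_pos|apply H].
Qed.

Lemma ext_coh (C K : pset G) : coherent Omega C -> subset_g Omega K (Lall Omega) ->
  (forall f g, K f -> K g -> K (fun w => f w + g w)) ->
  (forall l f, 0 < l -> K f -> K (fun w => l * f w)) ->
  ~ K (zero_g Omega) ->
  (forall c k, C c -> K k -> ~ (forall w, c w + k w = 0)) ->
  coherent Omega (fun g => C g \/ K g \/ exists c k, C c /\ K k /\ forall w, g w = c w + k w).
Proof.
  intros [C1 [C2 [C3 [C4 C5]]]] KL K4 K5 K0 CK.
  split; [|split; [|split; [|split]]].
  - intros g [Hg|[Hg|[c [k [Hc [Hk Hw]]]]]]; [apply C1, Hg|apply KL, Hg|].
    apply (gamble_sum c k); [apply C1, Hc|apply KL, Hk|exact Hw].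
  - intros g Hg; left; apply C2, Hg.
  - intros [Hg|[Hg|[c [k [Hc [Hk Hw]]]]]]; [tauto|tauto|].
    apply (CK c k Hc Hk); intro w; rewrite <- Hw; reflexivity.
  - intros f g [Hf|[Hf|[c [k [Hc [Hk Hw]]]]]] [Hg|[Hg|[c' [k' [Hc' [Hk' Hw']]]]]].
    + left; apply C4; assumption.
    + right; right; exists f, g; split; [assumption|split; [assumption|reflexivity]].
    + right; right; exists (fun w => f w + c' w), k'; split; [apply C4; assumption|split; [assumption|]].
      intro w; rewrite Hw'; ring.
    + right; right; exists g, f; split; [assumption|split; [assumption|]]. intro w; ring.
    + right; left; apply K4; assumption.
    + right; right; exists c', (fun w => f w + k' w); split; [assumption|split; [apply K4; assumption|]].
      intro w; rewrite Hw'; ring.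
    + right; right; exists (fun w => c w + g w), k; split; [apply C4; assumption|split; [assumption|]].
      intro w; rewrite Hw; ring.
    + right; right; exists c, (fun w => k w + g w); split; [assumption|split; [apply K4; assumption|]].
      intro w; rewrite Hw; ring.
    + right; right; exists (fun w => c w + c' w), (fun w => k w + k' w);
        split; [apply C4; assumption|split; [apply K4; assumption|]].
      intro w; rewrite Hw, Hw'; ring.
  - intros l f Hl [Hf|[Hf|[c [k [Hc [Hk Hw]]]]]].
    + left; apply C5; assumption.
    + right; left; apply K5; assumption.
    + right; right; exists (fun w => l * c w), (fun w => l * k w);
        split; [apply C5; assumption|split; [apply K5; assumption|]].
      intro w; rewrite Hw; ring.
Qed.

Lemma zorn_atom (E : pset G) : coherent Omega E -> exists M, atom Omega M /\ subset_g Omega E M.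
Proof.
  intro HE.
  pose (P' := fun A : pset G => (coherent Omega A /\ subset_g Omega E A) \/ A = (fun _ => False)).
  assert (Hne : forall A f, P' A -> A f -> coherent Omega A /\ subset_g Omega E A).
  { intros A f [H|H] Hf; [exact H|]. rewrite H in Hf; destruct Hf. }
  destruct (@classical_sets.Zorn_bigcup G P') as [A [HA Hmax]].
  - intros F HF Htot.
    destruct (classic (exists X f, F X /\ X f)) as [[X0 [f0 [HX0 Hf0]]]|Hno].
    + left.
      assert (HX0c := Hne X0 f0 (HF X0 HX0) Hf0).
      assert (Hmem : forall f, classical_sets.bigcup F (fun X => X) f ->
                 exists X, F X /\ X f /\ coherent Omega X).
      { intros f [X HX Hf]. exists X; split; [exact HX|split; [exact Hf|]].
        exact (proj1 (Hne X f (HF X HX) Hf)). }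
      split.
      * split; [|split; [|split; [|split]]].
        -- intros f Hf; destruct (Hmem f Hf) as [X [_ [Hf' HXc]]]. apply HXc, Hf'.
        -- intros f Hf; exists X0; [exact HX0|]. apply (proj1 HX0c), Hf.
        -- intros Hf; destruct (Hmem _ Hf) as [X [_ [Hf' HXc]]]. apply HXc, Hf'.
        -- intros f g Hf Hg.
           destruct (Hmem f Hf) as [X [HX [HfX HXc]]].
           destruct (Hmem g Hg) as [Y [HY [HgY HYc]]].
           destruct (Htot X Y HX HY) as [HXY|HYX].
           ++ exists Y; [exact HY|]. apply HYc; [apply HXY|]; assumption.
           ++ exists X; [exact HX|]. apply HXc; [|apply HYX]; assumption.
        -- intros l f Hl Hf. destruct (Hmem f Hf) as [X [HX [HfX HXc]]].
           exists X; [exact HX|]. apply HXc; assumption.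
      * intros f Hf; exists X0; [exact HX0|]. apply (proj2 HX0c), Hf.
    + right. apply pset_ext; intro f; split; [|intros []].
      intros [X HX Hf]; apply Hno; exists X, f; tauto.
  - assert (HAc : coherent Omega A /\ subset_g Omega E A).
    { destruct HA as [HA|HA]; [exact HA|].
      destruct (classic (subset_g Omega E A)) as [HEA|HEA].
      - assert (A = E) as ->.
        { apply pset_ext; intro f; split; [rewrite HA; intros []|apply HEA]. }
        split; [exact HE|intros f Hf; exact Hf].
      - exfalso; apply (Hmax E); [|left; split; [exact HE|intros f Hf; exact Hf]].
        split; [intros f Hf; rewrite HA in Hf; destruct Hf|exact HEA]. }
    exists A; split; [|exact (proj2 HAc)].
    split; [exact (proj1 HAc)|].
    intros M' HM' HAM'.
    destruct (classic (subset_g Omega M' A)) as [HMA|HMA].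
    + apply pset_ext; intro f; split; [apply HMA|apply HAM'].
    + exfalso; apply (Hmax M'); [split; [exact HAM'|exact HMA]|].
      left; split; [exact HM'|]. intros f Hf; apply HAM', (proj2 HAc), Hf.
Qed.

Lemma atom_pm (M : pset G) (f : G) : atom Omega M -> gamble Omega f -> f <> zero_g Omega ->
  M f \/ M (fun w => - f w).
Proof.
  intros [HMc HMmax] Hf Hf0.
  destruct (classic (M f)) as [H|Hnf]; [left; exact H|].
  destruct (classic (M (fun w => - f w))) as [H|Hnmf]; [right; exact H|].
  exfalso.
  set (K := fun g : G => exists l, 0 < l /\ g = (fun w => l * f w)).
  assert (HE := ext_coh M K HMc).
  match type of HE with _ -> _ -> _ -> _ -> _ -> coherent Omega ?E' =>
    assert (Hc : coherent Omega E') end.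
  { apply HE.
    - intros g [l [Hl ->]]; apply gamble_scale, Hf.
    - intros g h [l [Hl ->]] [l' [Hl' ->]]; exists (l + l'); split; [lra|].
      apply functional_extensionality; intro w; ring.
    - intros l' g Hl' [l [Hl ->]]; exists (l' * l); split; [apply Rmult_lt_0_compat; assumption|].
      apply functional_extensionality; intro w; ring.
    - intros [l [Hl Heq]]; apply Hf0; apply functional_extensionality; intro w.
      assert (H := f_equal (fun g => g w) Heq); simpl in H; unfold zero_g in *.
      symmetry in H; apply Rmult_integral in H; destruct H; [lra|auto].
    - intros c k Hc [l [Hl ->]] Hw; apply Hnmf.
      assert (Heq : (fun w => - f w) = (fun w => / l * c w)).
      { apply functional_extensionality; intro w; specialize (Hw w).
        field_simplify_eq; [lra|lra]. }
      rewrite Heq; apply (proj2 (proj2 (proj2 (proj2 HMc)))); [apply Rinv_0_lt_compat; exact Hl|exact Hc]. }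
  assert (Heq := HMmax _ Hc (fun g Hg => or_introl Hg)).
  apply Hnf; rewrite <- Heq; right; left; exists 1; split; [lra|].
  apply functional_extensionality; intro w; ring.
Qed.

Lemma Cl_sub (K M : pset G) : coherent Omega M -> subset_g Omega K M -> subset_g Omega (Cl Omega K) M.
Proof. intros HM HKM f Hf; apply Hf; [left; exact HM|exact HKM]. Qed.

Lemma Cl_ext (K : pset G) : subset_g Omega K (Cl Omega K).
Proof. intros f Hf D _ HKD; apply HKD, Hf. Qed.

Lemma Cl_iff (K M : pset G) : coherent Omega M ->
  (subset_g Omega (Cl Omega K) M <-> subset_g Omega K M).
Proof.
  intro HM; split; [intros H f Hf; apply H, Cl_ext, Hf|apply Cl_sub, HM].
Qed.

Lemma Lpart_opp P (f : G) : Lpart Omega P f -> Lpart Omega P (fun w => - f w).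
Proof.
  intros [Hg Hc]; split; [apply (gamble_sum (fun w => -1 * f w) (fun _ => 0)); [apply gamble_scale, Hg|exists 0; intro; rewrite Rabs_R0; lra|intro; ring]|].
  intros B HB w w' Hw Hw'; rewrite (Hc B HB w w' Hw Hw'); reflexivity.
Qed.

Lemma claim P (N M' : pset G) : atom Omega N -> atom Omega M' ->
  subset_g Omega (fun f => N f /\ Lpart Omega P f) M' ->
  forall f, M' f -> Lpart Omega P f -> N f.
Proof.
  intros HN HM' Hsub f Hf Hl.
  assert (HM'c := proj1 HM').
  destruct (atom_pm N f HN (proj1 Hl)) as [H|H].
  - intro E; subst f; apply (proj1 (proj2 (proj2 HM'c))), Hf.
  - exact H.
  - exfalso. assert (Hm : M' (fun w => - f w)) by (apply Hsub; split; [exact H|apply Lpart_opp, Hl]).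
    assert (Hs := proj1 (proj2 (proj2 (proj2 HM'c))) _ _ Hf Hm).
    apply (proj1 (proj2 (proj2 HM'c))).
    replace (zero_g Omega) with (fun w => f w + - f w); [exact Hs|].
    apply functional_extensionality; intro w; unfold zero_g; ring.
Qed.

End Proofs.

Theorem theorem5 (Omega : Type) (Q : Type) (Part : Q -> pset (pset Omega))
  (HPart : forall x, is_partition Omega (Part x))
  (Hjoin : forall x y, exists z, Part z = pjoin Omega (Part x) (Part y)) :
  forall (D1 D2 D : pset (Omega -> R)) (x : Q),
    Phi Omega D1 -> Phi Omega D2 -> Phi Omega D ->
    At Omega (combine Omega D1 D2) = (fun M => At Omega D1 M /\ At Omega D2 M) /\
    (At Omega (Lall Omega) = (fun _ => False) /\ At Omega (Lplus Omega) = AtPhi Omega) /\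
    At Omega (eps Omega (Part x) D) = sigma_x Omega (Part x) (At Omega D).
Proof.
  intros D1 D2 D x H1 H2 HD.
  split; [|split; [split|]].
  - apply pset2_ext; intro M; unfold At, combine; split.
    + intros [HM Hsub]; rewrite (Cl_iff _ _ _ (proj1 HM)) in Hsub.
      split; split; try exact HM; intros f Hf; apply Hsub; tauto.
    + intros [[HM Hs1] [_ Hs2]]; split; [exact HM|].
      rewrite (Cl_iff _ _ _ (proj1 HM)); intros f [Hf|Hf]; auto.
  - apply pset2_ext; intro M; split; [|intros []].
    intros [HM Hsub]; apply (proj1 (proj2 (proj2 (proj1 HM)))), Hsub.
    exists 0; intro; unfold zero_g; rewrite Rabs_R0; lra.
  - apply pset2_ext; intro M; split; [intros [HM _]; exact HM|].
    intro HM; split; [exact HM|exact (proj1 (proj2 (proj1 HM)))].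
  - apply pset2_ext; intro M; unfold At, sigma_x, eps, equiv_x, At; split.
    + intros [HM Hsub]; rewrite (Cl_iff _ _ _ (proj1 HM)) in Hsub.
      split; [exact HM|].
      destruct HD as [HD|HD].
      * assert (HE := ext_coh Omega D (fun f => M f /\ Lpart Omega (Part x) f) HD).
        match type of HE with _ -> _ -> _ -> _ -> _ -> coherent Omega ?E' =>
          assert (Hc : coherent Omega E') end.
        { destruct HM as [[M1 [M2 [M3 [M4 M5]]]] _].
          apply HE.
          - intros f [Hf _]; apply M1, Hf.
          - intros f g [Hf [Hfg Hfc]] [Hg [Hgg Hgc]]; split; [apply M4; assumption|].
            split; [apply (gamble_sum Omega f g); auto|].
            intros B HB w w' Hw Hw'; rewrite (Hfc B HB w w' Hw Hw'), (Hgc B HB w w' Hw Hw'); reflexivity.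
          - intros l f Hl [Hf [Hfg Hfc]]; split; [apply M5; assumption|].
            split; [apply (gamble_scale Omega); auto|].
            intros B HB w w' Hw Hw'; rewrite (Hfc B HB w w' Hw Hw'); reflexivity.
          - intros [Hz _]; apply M3, Hz.
          - intros c k Hc [Hk Hkl] Hw.
            assert (Hceq : c = (fun w => - k w)).
            { apply functional_extensionality; intro w; specialize (Hw w); lra. }
            assert (Hcm : M c).
            { apply Hsub; split; [exact Hc|rewrite Hceq; apply Lpart_opp, Hkl]. }
            apply M3. replace (zero_g Omega) with (fun w => c w + k w); [apply M4; assumption|].
            apply functional_extensionality; intro w; apply Hw. }
        destruct (zorn_atom Omega _ Hc) as [M' [HM' HEM']].
        exists M'; split; [split; [exact HM'|intros f Hf; apply HEM'; left; exact Hf]|].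
        exists M; split; [exact HM|split; split; try assumption].
        -- apply Cl_sub; [exact (proj1 HM)|intros f [Hf _]; exact Hf].
        -- apply Cl_sub; [exact (proj1 HM')|intros f Hf; apply HEM'; right; left; exact Hf].
      * exfalso; apply (proj1 (proj2 (proj2 (proj1 HM)))), Hsub; rewrite HD; split.
        -- exists 0; intro; unfold zero_g; rewrite Rabs_R0; lra.
        -- split; [exists 0; intro; unfold zero_g; rewrite Rabs_R0; lra|].
           intros; reflexivity.
    + intros [HM [M' [[HM' HDM'] [N [HN [[_ HNM] [_ HNM']]]]]]].
      split; [exact HM|].
      change (subset_g Omega (Cl Omega (fun f => D f /\ Lpart Omega (Part x) f)) M). rewrite (Cl_iff _ _ _ (proj1 HM)).
      change (subset_g Omega (Cl Omega (fun f => N f /\ Lpart Omega (Part x) f)) M) in HNM. change (subset_g Omega (Cl Omega (fun f => N f /\ Lpart Omega (Part x) f)) M') in HNM'. rewrite (Cl_iff _ _ _ (proj1 HM)) in HNM. rewrite (Cl_iff _ _ _ (proj1 HM')) in HNM'.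
      intros f [Hf Hl]. apply HNM; split; [|exact Hl].
      apply (claim Omega (Part x) N M' HN HM' HNM' f); [apply HDM', Hf|exact Hl].
Qed.
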